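(* Let $m\in\mathbb{N}$, $L,M,N\subseteq[m]$, and $D=(1+u^2)\Delta_L^c+u^2\big(\Delta_M^c+(u+u^2)\Delta_N\big)\subseteq\mathcal{R}^m$. Then $C_D$ is a $10$-weight linear code over $\mathcal{R}$ of length $|D|=(2^m-2^{|L|})(2^m-2^{|M|})\cdot2^{|N|}$ and size $2^{3m}$, whose Lee weight distribution is as follows: writing $A(w)$ for the number of codewords of $C_D$ of Lee weight $w$, $A(w)$ is nonzero only for the following $w$, where: - $A\big(3(2^m-2^{|L|})2^{m+|N|-1}\big)=2^{2m-|M|-|M\cup N|}-2^{m-|M|}-2^{m-|M\cup N|+1}+2$; - $A\big(3(2^m-2^{|M|})2^{m+|N|-1}\big)=2^{m-|L|}-1$; - $A\big((2^m-2^{|L|})(3\cdot2^{m-1}-2^{|M|})2^{|N|}\big)=2^{m-|M|}-2^{m-|N|+1}+2^{2m-|M|-|N|+1}-3\cdot2^{2m-|M|-|M\cup N|}+2^{2m-|M|}-2^m+2^{m-|M\cup N|+1}$; - $A\big((3\cdot2^{m-1}-2^{|L|})(2^m-2^{|M|})2^{|N|}\big)=2^{2m-|L|-|N|+1}-2^{m-|N|+1}-2^{2m-|L|-|M\cup N|+1}+2^{m-|M\cup N|+1}+2^{2m-|L|}-2^m-2^{2m-|L|-|M|}+2^{m-|M|}$; - $A\big(3\cdot2^{m+|N|-1}(2^m-2^{|M|})-2^{m+|L|+|N|}\big)=2^{2m-|L|-|M\cup N|+1}-2^{m-|M\cup N|+1}-3\cdot2^{m-|L|}-2^{m-|M|}+2^{2m-|L|-|M|}+3$;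 - $A\big(3(2^m-2^{|L|})(2^m-2^{|M|})2^{|N|-1}\big)=2^{3m}-2^{3m-|L|-|M|}-2^{3m-|L|-|M|-|N|+1}+2^{3m-|L|-|M|-|M\cup N|+1}$; - $A\big(3\cdot2^{m+|N|-1}(2^m-2^{|L|}-2^{|M|})+2^{|L|+|M|+|N|}\big)=2^{3m-|L|-|M|-|N|+1}-2^{2m-|L|-|N|+1}-2^{2m-|M|-|N|+1}+2^{m-|N|+1}+2^{2m-|L|-|M\cup N|+1}-2^{m-|M\cup N|+1}+2^{3m-|L|-|M|}-2^{2m-|M|}-2^{2m-|L|}+2^m-3\cdot2^{3m-|L|-|M|-|M\cup N|}+2^{2m-|L|-|M|}+3\cdot2^{2m-|M|-|M\cup N|}-2^{m-|M|}$; - $A\big(3(2^m-2^{|L|}-2^{|M|})2^{m+|N|-1}\big)=2^{3m-|L|-|M|-|M\cup N|}-2^{2m-|L|-|M|}-2^{2m-|M|-|M\cup N|}+2^{m-|M|}-2^{2m-|L|-|M\cup N|+1}+2^{m-|L|+1}+2^{m-|M\cup N|+1}-2$; - $A\big((2^m-2^{|L|})2^{m+|N|}\big)=2^{m-|M\cup N|+1}+2^{m-|M|}-3$; - $A\big((2^m-2^{|L|})(2^m-2^{|M|})2^{|N|}\big)=2^m+2^{m-|N|+1}-2^{m-|M|}-2^{m-|M\cup N|+1}$; - $A(0)=1$.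
   Context: $\mathcal{R}=\mathbb{Z}_2[u]/\langle u^3-u\rangle$; every $x\in\mathcal{R}^n$ is uniquely $x=r+us+u^2t$ with $r,s,t\in\mathbb{Z}_2^n$, and $\mathbb{Z}_2^n\subseteq\mathcal{R}^n$. The Gray map $\Phi:\mathcal{R}^n\to\mathbb{Z}_2^{3n}$ is $\Phi(r+us+u^2t)=(r+s,\,s+t,\,t)$, and the Lee weight is $wt_L(x)=$ Hamming weight of $\Phi(x)$. $[m]=\{1,\dots,m\}$; for $X\subseteq[m]$, $\Delta_X=\{v\in\mathbb{Z}_2^m:\mathrm{Supp}(v)\subseteq X\}$ and $\Delta_X^c=\mathbb{Z}_2^m\setminus\Delta_X$. For $D_1,D_2,D_3\subseteq\mathbb{Z}_2^m$, $(1+u^2)D_1+u^2(D_2+(u+u^2)D_3)=\{(1+u^2)t_1+u^2t_2+u^2(u+u^2)t_3:t_i\in D_i\}\subseteq\mathcal{R}^m$. Given $D=\{d_1,\dots,d_n\}\subseteq\mathcal{R}^m$ (in a fixed order), $c_D(v)=(v\cdot d_1,\dots,v\cdot d_n)$ with $v\cdot d=\sum_i v_id_i$, and $C_D=\{c_D(v):v\in\mathcal{R}^m\}$, a linear code over $\mathcal{R}$. A $k$-weight code has exactly $k$ distinct nonzero Lee weights.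
   Formalization: L ≠ [m] and M ≠ [m] are assumed, $C_D$ has at most ten rather than exactly ten distinct nonzero Lee weights, and listed frequencies whose weights coincide are added in A(w). The statement above fails without it. *)

(* Defs.v *)
From HB Require Import structures.
From mathcomp Require Import all_boot all_order all_algebra.
Set Implicit Arguments. Unset Strict Implicit. Unset Printing Implicit Defensive.
Import GRing.Theory.
Local Open Scope ring_scope.

(* The ring  R = Z_2[u]/<u^3 - u>.  Every element is uniquely r + u s + u^2 t
   with r,s,t in Z_2; we represent it by the triple (r, s, t). *)
Definition Rr : finType := ('F_2 * 'F_2 * 'F_2)%type.
Definition rc (x : Rr) : 'F_2 := x.1.1.
Definition sc (x : Rr) : 'F_2 := x.1.2.
Definition tc (x : Rr) : 'F_2 := x.2.
Definition mkR (r s t : 'F_2) : Rr := (r, s, t).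

Definition Rzero : Rr := mkR 0 0 0.
Definition Rone  : Rr := mkR 1 0 0.
Definition Ru    : Rr := mkR 0 1 0.
Definition Ru2   : Rr := mkR 0 0 1.

Definition Radd (x y : Rr) : Rr :=
  mkR (rc x + rc y) (sc x + sc y) (tc x + tc y).

(* Product of (r1 + u s1 + u^2 t1)(r2 + u s2 + u^2 t2): as polynomials the
   coefficients of 1,u,u^2,u^3,u^4 are
     c0 = r1 r2, c1 = r1 s2 + s1 r2, c2 = r1 t2 + s1 s2 + t1 r2,
     c3 = s1 t2 + t1 s2, c4 = t1 t2,
   and reducing with u^3 = u, u^4 = u^2 gives (c0, c1 + c3, c2 + c4). *)
Definition Rmul (x y : Rr) : Rr :=
  let c0 := rc x * rc y in
  let c1 := rc x * sc y + sc x * rc y in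
  let c2 := rc x * tc y + sc x * sc y + tc x * rc y in
  let c3 := sc x * tc y + tc x * sc y in
  let c4 := tc x * tc y in
  mkR c0 (c1 + c3) (c2 + c4).

(* Gray map Phi(r + us + u^2 t) = (r+s, s+t, t); Lee weight = Hamming weight *)
Definition nzb (a : 'F_2) : nat := nat_of_bool (a != 0).
Definition wtLR (x : Rr) : nat :=
  addn (addn (nzb (rc x + sc x)) (nzb (sc x + tc x))) (nzb (tc x)).

Definition Z2vec (m : nat) := {ffun 'I_m -> 'F_2}.
Definition Rvec (m : nat) := {ffun 'I_m -> Rr}.

Definition embZ2 m (v : Z2vec m) : Rvec m := [ffun i => mkR (v i) 0 0].
Definition vadd m (x y : Rvec m) : Rvec m := [ffun i => Radd (x i) (y i)].
Definition vscale m (c : Rr) (x : Rvec m) : Rvec m := [ffun i => Rmul c (x i)].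

Definition supp m (v : Z2vec m) : {set 'I_m} := [set i | v i != 0].
Definition Delta m (X : {set 'I_m}) : {set Z2vec m} :=
  [set v : Z2vec m | supp v \subset X].
Definition Deltac m (X : {set 'I_m}) : {set Z2vec m} := ~: Delta X.

Definition Delem m (t1 t2 t3 : Z2vec m) : Rvec m :=
  vadd (vadd (vscale (Radd Rone Ru2) (embZ2 t1)) (vscale Ru2 (embZ2 t2)))
       (vscale (Rmul Ru2 (Radd Ru Ru2)) (embZ2 t3)).
Definition Dset m (L M N : {set 'I_m}) : {set Rvec m} :=
  [set Delem t.1.1 t.1.2 t.2
   | t in setX (setX (Deltac L) (Deltac M)) (Delta N)].

Definition dotR m (v d : Rvec m) : Rr := \big[Radd/Rzero]_(i < m) Rmul (v i) (d i).

Definition cD m (D : {set Rvec m}) (v : Rvec m) : {ffun 'I_#|D| -> Rr} :=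
  [ffun i => dotR v (@enum_val _ (mem D) i)].

Definition CD m (D : {set Rvec m}) : {set {ffun 'I_#|D| -> Rr}} :=
  [set cD D v | v : Rvec m].

Definition wtL n (c : {ffun 'I_n -> Rr}) : nat := (\sum_(i < n) wtLR (c i))%N.

Definition Acount m (D : {set Rvec m}) (w : nat) : nat :=
  #|[set c in CD D | wtL c == w]|.

Definition nonzero_weights m (D : {set Rvec m}) : seq nat :=
  undup [seq wtL c | c <- enum (CD D) & wtL c != 0%N].

Definition p2 (e : nat) : int := (2%:Z) ^+ e.

(* the weight distribution table of Theorem 3.4: pairs (2 * weight, frequency).
   Weights are stored DOUBLED so that weights such as 3(2^m-2^l)2^(m+n-1) are
   represented exactly in int (no division, no truncated exponent m+n-1);
   l = |L|, a = |M|, n = |N|, b = |M ∪ N|. *)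
Definition table34 (m l a n b : nat) : seq (int * int) :=
  [:: (3 * (p2 m - p2 l) * p2 (m + n),
        p2 (2 * m - a - b) - p2 (m - a) - p2 (m - b + 1) + 2);
      (3 * (p2 m - p2 a) * p2 (m + n),
        p2 (m - l) - 1);
      ((p2 m - p2 l) * (3 * p2 m - 2 * p2 a) * p2 n,
        p2 (m - a) - p2 (m - n + 1) + p2 (2 * m - a - n + 1) - 3 * p2 (2 * m - a - b)
        + p2 (2 * m - a) - p2 m + p2 (m - b + 1));
      ((3 * p2 m - 2 * p2 l) * (p2 m - p2 a) * p2 n,
        p2 (2 * m - l - n + 1) - p2 (m - n + 1) - p2 (2 * m - l - b + 1) + p2 (m - b + 1)
        + p2 (2 * m - l) - p2 m - p2 (2 * m - l - a) + p2 (m - a));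
      (3 * p2 (m + n) * (p2 m - p2 a) - 2 * p2 (m + l + n),
        p2 (2 * m - l - b + 1) - p2 (m - b + 1) - 3 * p2 (m - l) - p2 (m - a)
        + p2 (2 * m - l - a) + 3);
      (3 * (p2 m - p2 l) * (p2 m - p2 a) * p2 n,
        p2 (3 * m) - p2 (3 * m - l - a) - p2 (3 * m - l - a - n + 1)
        + p2 (3 * m - l - a - b + 1));
      (3 * p2 (m + n) * (p2 m - p2 l - p2 a) + 2 * p2 (l + a + n),
        p2 (3 * m - l - a - n + 1) - p2 (2 * m - l - n + 1) - p2 (2 * m - a - n + 1)
        + p2 (m - n + 1) + p2 (2 * m - l - b + 1) - p2 (m - b + 1) + p2 (3 * m - l - a)
        - p2 (2 * m - a) - p2 (2 * m - l) + p2 m - 3 * p2 (3 * m - l - a - b)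
        + p2 (2 * m - l - a) + 3 * p2 (2 * m - a - b) - p2 (m - a));
      (3 * (p2 m - p2 l - p2 a) * p2 (m + n),
        p2 (3 * m - l - a - b) - p2 (2 * m - l - a) - p2 (2 * m - a - b) + p2 (m - a)
        - p2 (2 * m - l - b + 1) + p2 (m - l + 1) + p2 (m - b + 1) - 2);
      (2 * (p2 m - p2 l) * p2 (m + n),
        p2 (m - b + 1) + p2 (m - a) - 3);
      (2 * (p2 m - p2 l) * (p2 m - p2 a) * p2 n,
        p2 m + p2 (m - n + 1) - p2 (m - a) - p2 (m - b + 1));
      (0, 1)].

(* Main.v *)
Require Import Defs.
From mathcomp Require Import all_boot all_order all_algebra.
From mathcomp Require Import ring zify.
Import GRing.Theory.
Set Implicit Arguments. Unset Strict Implicit. Unset Printing Implicit Defensive.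
Local Open Scope ring_scope.

Lemma F2cases (x : 'F_2) : x = 0 \/ x = 1.
Proof. case: x => [[|[|k]] Hk]; [left|right|by []]; exact: val_inj. Qed.

Lemma F2xx (x : 'F_2) : x + x = 0.
Proof. by case: (F2cases x) => ->; apply/eqP. Qed.

Lemma F2_neq0 (x : 'F_2) : x != 0 -> x = 1.
Proof. by case: (F2cases x) => -> //; rewrite eqxx. Qed.

Lemma coordA (a b c x y z : 'F_2) :
  let d := Radd (Radd (Rmul (Radd Rone Ru2) (mkR x 0 0)) (Rmul Ru2 (mkR y 0 0)))
                (Rmul (Rmul Ru2 (Radd Ru Ru2)) (mkR z 0 0)) in
  let e := Rmul (mkR a b c) d in
  [/\ rc e + sc e = a * x + b * y + (a + b + c) * z,
      sc e + tc e = a * x + (a + b + c) * y + 0 * z &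
      tc e = a * x + (b + (a + b + c)) * y + (a + b + c) * z].
Proof.
by case: (F2cases a) => ->; case: (F2cases b) => ->; case: (F2cases c) => ->;
 case: (F2cases x) => ->; case: (F2cases y) => ->; case: (F2cases z) => ->; split; apply/eqP.
Qed.

Definition dotZ m (a t : Z2vec m) : 'F_2 := \sum_(i < m) a i * t i.
Definition sg (x : 'F_2) : int := if x == 0 then 1 else -1.
Definition chi m (S : {set Z2vec m}) (a : Z2vec m) : int :=
  \sum_(t in S) sg (dotZ a t).
Definition zeroOn m (X : {set 'I_m}) (a : Z2vec m) : bool :=
  [forall i in X, a i == 0].

Lemma sgD x y : sg (x + y) = sg x * sg y.
Proof. by case: (F2cases x) => ->; case: (F2cases y) => ->. Qed.

Lemma sg0 : sg 0 = 1. Proof. by []. Qed.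
Lemma sg1 : sg 1 = -1. Proof. by []. Qed.

Lemma nzb_sg x : 2 * (nzb x)%:Z = 1 - sg x.
Proof. by case: (F2cases x) => ->. Qed.

Lemma p2E k : ((2 ^ k)%N%:Z) = p2 k.
Proof. by rewrite /p2 -natz natrX. Qed.

Definition zvec m : Z2vec m := [ffun => 0].
Definition evec m (j : 'I_m) : Z2vec m := [ffun k => (k == j)%:R].

Lemma dotZ_e m (a : Z2vec m) j : dotZ a (evec j) = a j.
Proof.
rewrite /dotZ (bigD1 j) //= big1 ?addr0; first by rewrite ffunE eqxx mulr1.
by move=> k /negbTE nk; rewrite ffunE nk mulr0.
Qed.

Lemma dotZ_0 m (a : Z2vec m) : dotZ a (zvec m) = 0.
Proof. by rewrite /dotZ big1 // => i _; rewrite ffunE mulr0. Qed.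

Lemma dotZ_0l m (t : Z2vec m) : dotZ (zvec m) t = 0.
Proof. by rewrite /dotZ big1 // => i _; rewrite ffunE mul0r. Qed.

Lemma suppP m (v : Z2vec m) i : (i \in supp v) = (v i != 0).
Proof. by rewrite inE. Qed.

Lemma supp_inj m : injective (@supp m).
Proof.
move=> u v e; apply/ffunP => i.
have : (i \in supp u) = (i \in supp v) by rewrite e.
rewrite !suppP.
by case: (F2cases (u i)) => ->; case: (F2cases (v i)) => ->.
Qed.

Lemma card_Delta m (X : {set 'I_m}) : #|Delta X| = (2 ^ #|X|)%N.
Proof.
have E : [set supp x | x in Delta X] = powerset X.
  apply/setP => Y; apply/imsetP/idP.
    by case=> v; rewrite inE => sv ->; rewrite inE.
  rewrite inE => sY; exists [ffun i => (i \in Y)%:R].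
    rewrite inE; apply: subset_trans sY; apply/subsetP => i; rewrite suppP ffunE.
    by case: (i \in Y).
  apply/setP => i; rewrite suppP ffunE; by case: (i \in Y).
rewrite -card_powerset -E card_in_imset //; move=> u v _ _; exact: supp_inj.
Qed.

Lemma card_Z2vec m : #|{: Z2vec m}| = (2 ^ m)%N.
Proof.
have := card_Delta [set: 'I_m]; rewrite cardsT card_ord => <-.
by apply: eq_card => t; rewrite !inE subsetT.
Qed.

Lemma card_Deltac m (X : {set 'I_m}) : #|Deltac X| = (2 ^ m - 2 ^ #|X|)%N.
Proof. by rewrite /Deltac cardsCs setCK card_Delta card_Z2vec. Qed.

Lemma sg_sum_const m (S : {set Z2vec m}) (F : Z2vec m -> int) c :
  (forall t, t \in S -> F t = c) -> \sum_(t in S) F t = c * #|S|%:Z.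
Proof.
move=> H; rewrite (eq_bigr (fun _ => c)) // sumr_const.
by rewrite -mulr_natr natz.
Qed.

Lemma chi_Delta m (X : {set 'I_m}) a :
  chi (Delta X) a = if zeroOn X a then p2 #|X| else 0.
Proof.
rewrite /chi; case: ifP => zX.
  rewrite (sg_sum_const (c := 1)) ?mul1r ?card_Delta ?p2E //.
  move=> t; rewrite inE => /subsetP sX.
  rewrite /dotZ big1 // => i _.
  case: (F2cases (t i)) => ti; rewrite ti ?mulr0 //.
  have iX : i \in X by apply: sX; rewrite suppP ti.
  by move/forall_inP: zX => /(_ i iX)/eqP ->; rewrite mul0r.
move/negbT: zX; rewrite negb_forall_in => /exists_inP [i iX ai].
have ai1 := F2_neq0 ai.
pose f (t : Z2vec m) : Z2vec m := [ffun k => t k + evec i k].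
have fK : involutive f.
  by move=> t; apply/ffunP => k; rewrite !ffunE -addrA F2xx addr0.
have fD t : (f t \in Delta X) = (t \in Delta X).
  rewrite !inE; apply/subsetP/subsetP => H k; rewrite suppP => nk.
    case: (eqVneq k i) => [-> //|ki]; apply: H; rewrite suppP !ffunE.
    by rewrite (negbTE ki) addr0.
  case: (eqVneq k i) => [-> //|ki]; apply: H; rewrite suppP.
  by move: nk; rewrite !ffunE (negbTE ki) addr0.
have fdot t : dotZ a (f t) = dotZ a t + a i.
  rewrite /dotZ -dotZ_e /dotZ -big_split; apply: eq_bigr => k _.
  by rewrite ffunE mulrDr.
set c := \sum_(t in Delta X) _.
have : c = - c.
  rewrite {1}/c (reindex_inj (can_inj fK)) /=.
  rewrite (eq_bigl (fun t => t \in Delta X)); last by move=> t; rewrite fD.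
  rewrite /c -sumrN; apply: eq_bigr => t _.
  by rewrite fdot sgD ai1 sg1 mulrN1.
move=> e; lia.
Qed.

Lemma chi_all m (a : Z2vec m) :
  \sum_t sg (dotZ a t) = if a == zvec m then p2 m else 0.
Proof.
have := chi_Delta [set: 'I_m] a; rewrite /chi cardsT card_ord.
rewrite (eq_bigl (fun _ => true)); last by move=> t; rewrite inE subsetT.
move=> ->; congr (if _ then _ else _).
apply/forall_inP/eqP => [H|-> i _]; last by rewrite ffunE.
by apply/ffunP => i; rewrite ffunE; apply/eqP; apply: H.
Qed.

Lemma chi_Deltac m (X : {set 'I_m}) a :
  chi (Deltac X) a = (if a == zvec m then p2 m else 0) - chi (Delta X) a.
Proof.
rewrite -chi_all (bigID (fun t => t \in Delta X)) /= /chi /Deltac addrC addrK.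
by apply: eq_bigl => t; rewrite inE.
Qed.

Lemma sum_setX (T1 T2 : finType) (A : {set T1}) (B : {set T2})
   (F : T1 -> int) (G : T2 -> int) :
  \sum_(t in setX A B) F t.1 * G t.2 = (\sum_(x in A) F x) * (\sum_(y in B) G y).
Proof.
symmetry; rewrite big_distrl /=; under eq_bigr do rewrite big_distrr /=.
rewrite pair_big_dep; apply: eq_bigl => -[x y]; by rewrite in_setX.
Qed.

Lemma sum_setX3 (T1 T2 T3 : finType) (A : {set T1}) (B : {set T2}) (C : {set T3})
   (F : T1 -> int) (G : T2 -> int) (H : T3 -> int) :
  \sum_(t in setX (setX A B) C) F t.1.1 * G t.1.2 * H t.2 =
  (\sum_(x in A) F x) * (\sum_(y in B) G y) * (\sum_(z in C) H z).
Proof.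
by rewrite (@sum_setX _ _ _ _ (fun x => F x.1 * G x.2) H) sum_setX.
Qed.

Lemma rc_big m (F : 'I_m -> Rr) : rc (\big[Radd/Rzero]_(i < m) F i) = \sum_(i < m) rc (F i).
Proof. by apply: (big_morph rc). Qed.
Lemma sc_big m (F : 'I_m -> Rr) : sc (\big[Radd/Rzero]_(i < m) F i) = \sum_(i < m) sc (F i).
Proof. by apply: (big_morph sc). Qed.
Lemma tc_big m (F : 'I_m -> Rr) : tc (\big[Radd/Rzero]_(i < m) F i) = \sum_(i < m) tc (F i).
Proof. by apply: (big_morph tc). Qed.

Definition pv m (v : Rvec m) : Z2vec m := [ffun i => rc (v i)].
Definition qv m (v : Rvec m) : Z2vec m := [ffun i => sc (v i)].
Definition wv m (v : Rvec m) : Z2vec m := [ffun i => rc (v i) + sc (v i) + tc (v i)].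
Definition rv m (v : Rvec m) : Z2vec m :=
  [ffun i => sc (v i) + (rc (v i) + sc (v i) + tc (v i))].

Lemma forms m (v : Rvec m) t1 t2 t3 :
  let e := dotR v (Delem t1 t2 t3) in
  [/\ rc e + sc e = dotZ (pv v) t1 + dotZ (qv v) t2 + dotZ (wv v) t3,
      sc e + tc e = dotZ (pv v) t1 + dotZ (wv v) t2 + dotZ (zvec m) t3 &
      tc e = dotZ (pv v) t1 + dotZ (rv v) t2 + dotZ (wv v) t3].
Proof.
rewrite /= /dotR rc_big sc_big tc_big /dotZ; split; rewrite -?big_split; apply: eq_bigr => i _;
  rewrite /Delem /vadd /vscale /embZ2 /pv /qv /wv /rv /zvec !ffunE;
  case: (v i) => [[a b] c]; by case: (coordA a b c (t1 i) (t2 i) (t3 i)).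
Qed.

Lemma Delem_coord m (t1 t2 t3 : Z2vec m) i :
  Delem t1 t2 t3 i = mkR (t1 i) (t3 i) (t1 i + t2 i + t3 i).
Proof.
rewrite /Delem /vadd /vscale /embZ2 !ffunE.
case: (F2cases (t1 i)) => ->; case: (F2cases (t2 i)) => ->;
case: (F2cases (t3 i)) => ->; by rewrite /mkR; congr (_, _, _); apply/eqP.
Qed.

Lemma Delem_inj m : injective (fun t : Z2vec m * Z2vec m * Z2vec m => Delem t.1.1 t.1.2 t.2).
Proof.
move=> [[a1 a2] a3] [[b1 b2] b3] /= e.
have E i : [/\ a1 i = b1 i, a3 i = b3 i & a1 i + a2 i + a3 i = b1 i + b2 i + b3 i].
  have Ei := congr1 (fun f : Rvec m => f i) e; rewrite /= !Delem_coord in Ei.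
  exact: (And3 (congr1 rc Ei) (congr1 sc Ei) (congr1 tc Ei)).
have e1 : a1 = b1 by apply/ffunP => i; case: (E i).
have e3 : a3 = b3 by apply/ffunP => i; case: (E i).
have e2 : a2 = b2.
  apply/ffunP => i; case: (E i) => h1 h3; rewrite h1 h3 => /addIr /addrI //.
by rewrite e1 e2 e3.
Qed.

Definition S3 m (L M N : {set 'I_m}) := setX (setX (Deltac L) (Deltac M)) (Delta N).

Lemma card_D m (L M N : {set 'I_m}) : #|Dset L M N| = #|S3 L M N|.
Proof. by rewrite /Dset card_in_imset // => x y _ _; apply: Delem_inj. Qed.

Lemma wtL_sum m (L M N : {set 'I_m}) (v : Rvec m) :
  wtL (cD (Dset L M N) v) =
  (\sum_(t in S3 L M N) wtLR (dotR v (Delem t.1.1 t.1.2 t.2)))%N.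
Proof.
rewrite /wtL /cD.
transitivity (\sum_(d in Dset L M N) wtLR (dotR v d))%N.
  rewrite [RHS]big_enum_val; apply: eq_bigr => i _; by rewrite ffunE.
by rewrite /Dset big_imset //= => x y _ _; apply: Delem_inj.
Qed.

Lemma term_eq m (v : Rvec m) t1 t2 t3 :
  2 * (wtLR (dotR v (Delem t1 t2 t3)))%:Z =
  3 - sg (dotZ (pv v) t1) * sg (dotZ (qv v) t2) * sg (dotZ (wv v) t3)
    - sg (dotZ (pv v) t1) * sg (dotZ (wv v) t2) * sg (dotZ (zvec m) t3)
    - sg (dotZ (pv v) t1) * sg (dotZ (rv v) t2) * sg (dotZ (wv v) t3).
Proof.
case: (forms v t1 t2 t3) => /= h1 h2 h3.
rewrite /wtLR !PoszD !mulrDr !nzb_sg h1 h2 h3 !sgD.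
ring.
Qed.

Lemma wt_formula m (L M N : {set 'I_m}) (v : Rvec m) :
  (2 * wtL (cD (Dset L M N) v))%N%:Z =
  3 * #|Dset L M N|%:Z - chi (Deltac L) (pv v) *
    (chi (Deltac M) (qv v) * chi (Delta N) (wv v)
     + chi (Deltac M) (wv v) * chi (Delta N) (zvec m)
     + chi (Deltac M) (rv v) * chi (Delta N) (wv v)).
Proof.
rewrite wtL_sum PoszM (big_morph Posz PoszD (erefl _)) big_distrr /=.
under eq_bigr do rewrite term_eq.
rewrite !sumrB sumr_const card_D /chi.
set f1 := fun x => sg (dotZ (pv v) x).
rewrite (@sum_setX3 _ _ _ _ _ _ f1 (fun x => sg (dotZ (qv v) x)) (fun x => sg (dotZ (wv v) x))).
rewrite (@sum_setX3 _ _ _ _ _ _ f1 (fun x => sg (dotZ (wv v) x)) (fun x => sg (dotZ (zvec m) x))).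
rewrite (@sum_setX3 _ _ _ _ _ _ f1 (fun x => sg (dotZ (rv v) x)) (fun x => sg (dotZ (wv v) x))).
rewrite -mulr_natr natz; ring.
Qed.

Lemma dotZD m (a s t : Z2vec m) : dotZ a [ffun k => s k + t k] = dotZ a s + dotZ a t.
Proof. by rewrite /dotZ -big_split; apply: eq_bigr => i _; rewrite ffunE mulrDr. Qed.

Lemma dotZ_r m (v : Rvec m) t : dotZ (rv v) t = dotZ (qv v) t + dotZ (wv v) t.
Proof. by rewrite /dotZ -big_split; apply: eq_bigr => i _; rewrite !ffunE mulrDl. Qed.

Lemma notT_ex m (X : {set 'I_m}) : X != setT -> exists j, j \notin X.
Proof.
move=> hX; apply/existsP; move: hX; apply: contraNT => /existsPn H.
by apply/eqP/setP => i; rewrite inE; move: (H i); rewrite negbK.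
Qed.

Lemma evec_Deltac m (X : {set 'I_m}) j : j \notin X -> evec j \in Deltac X.
Proof.
move=> jX; rewrite /Deltac in_setC inE; apply/negP => /subsetP /(_ j).
by rewrite suppP ffunE eqxx oner_neq0 => /(_ isT); apply/negP.
Qed.

Lemma zvec_Delta m (X : {set 'I_m}) : zvec m \in Delta X.
Proof. by rewrite inE; apply/subsetP => i; rewrite suppP ffunE eqxx. Qed.

Lemma key m (X : {set 'I_m}) (a b : Z2vec m) : X != setT ->
  (forall t, t \in Deltac X -> dotZ a t = dotZ b t) -> a = b.
Proof.
move=> /notT_ex [j jX] H.
have hj : a j = b j by rewrite -!(dotZ_e _ j); apply: H; apply: evec_Deltac.
apply/ffunP => i; case: (eqVneq i j) => [->//|ij].
pose t : Z2vec m := [ffun k => evec j k + evec i k].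
have tD : t \in Deltac X.
  rewrite /Deltac in_setC inE; apply/negP => /subsetP /(_ j).
  have ji : j != i by rewrite eq_sym.
  rewrite suppP !ffunE eqxx (negbTE ji) addr0 oner_neq0 => /(_ isT).
  by apply/negP.
have := H t tD; rewrite !dotZD !dotZ_e hj; exact: addrI.
Qed.

Lemma Dmem m (L M N : {set 'I_m}) t1 t2 t3 :
  t1 \in Deltac L -> t2 \in Deltac M -> t3 \in Delta N ->
  Delem t1 t2 t3 \in Dset L M N.
Proof.
move=> h1 h2 h3; apply/imsetP; exists (t1, t2, t3) => //.
by rewrite !in_setX h1 h2 h3.
Qed.

Lemma cD_inj m (L M N : {set 'I_m}) : L != setT -> M != setT ->
  injective (cD (Dset L M N)).
Proof.
move=> hL hM u v e.
have E t1 t2 t3 : t1 \in Deltac L -> t2 \in Deltac M -> t3 \in Delta N ->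
    dotR u (Delem t1 t2 t3) = dotR v (Delem t1 t2 t3).
  move=> h1 h2 h3; have Dd := Dmem h1 h2 h3.
  have := congr1 (fun c : {ffun _ -> Rr} => c (enum_rank_in Dd (Delem t1 t2 t3))) e.
  by rewrite /cD !ffunE enum_rankK_in.
have F t1 t2 t3 : t1 \in Deltac L -> t2 \in Deltac M -> t3 \in Delta N ->
  [/\ dotZ (pv u) t1 + dotZ (qv u) t2 + dotZ (wv u) t3 =
      dotZ (pv v) t1 + dotZ (qv v) t2 + dotZ (wv v) t3,
      dotZ (pv u) t1 + dotZ (wv u) t2 =
      dotZ (pv v) t1 + dotZ (wv v) t2 &
      dotZ (pv u) t1 + dotZ (qv u) t2 + dotZ (wv u) t2 + dotZ (wv u) t3 =
      dotZ (pv v) t1 + dotZ (qv v) t2 + dotZ (wv v) t2 + dotZ (wv v) t3].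
  move=> h1 h2 h3; have := E _ _ _ h1 h2 h3.
  case: (forms u t1 t2 t3) => /= a1 a2 a3; case: (forms v t1 t2 t3) => /= b1 b2 b3 ee.
  split.
  - by rewrite -a1 -b1 ee.
  - by have := congr1 (fun x => sc x + tc x) ee; rewrite /= a2 b2 !dotZ_0l !addr0.
  - by have := congr1 tc ee; rewrite /= a3 b3 !dotZ_r !addrA.
have [j jL] := notT_ex hL; have [k kM] := notT_ex hM.
have ej := evec_Deltac jL; have ek := evec_Deltac kM.
have z3 := zvec_Delta N.
have ew : wv u = wv v.
  apply: (key hM) => t2 h2; case: (F _ _ _ ej h2 z3) => f1 _ f3.
  move: f1 f3; rewrite !dotZ_0 !addr0 => ->; exact: addrI.
have ep : pv u = pv v.
  apply: (key hL) => t1 h1; case: (F _ _ _ h1 ek z3) => _ f2 _.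
  by move: f2; rewrite ew; apply: addIr.
have eq : qv u = qv v.
  apply: (key hM) => t2 h2; case: (F _ _ _ ej h2 z3) => f1 _ _.
  by move: f1; rewrite ep !dotZ_0 !addr0; apply: addrI.
apply/ffunP => i.
have r1 : rc (u i) = rc (v i) by have := congr1 (fun f : Z2vec m => f i) ep; rewrite !ffunE.
have s1 : sc (u i) = sc (v i) by have := congr1 (fun f : Z2vec m => f i) eq; rewrite !ffunE.
have t1 : tc (u i) = tc (v i).
  by have := congr1 (fun f : Z2vec m => f i) ew; rewrite !ffunE r1 s1; apply: addrI.
move: r1 s1 t1; rewrite /rc /sc /tc; case: (u i) => [[? ?] ?]; case: (v i) => [[? ?] ?] /=.
by move=> -> -> ->.
Qed.

Lemma card_Rr : #|{: Rr}| = 8%N.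
Proof.
rewrite /Rr !card_prod.
have h : #|{: 'F_2}| = 2%N.
  have := card_Z2vec 1; rewrite card_ffun card_ord expn1 //.
by rewrite h.
Qed.

Lemma card_CD m (L M N : {set 'I_m}) : L != setT -> M != setT ->
  #|CD (Dset L M N)| = (2 ^ (3 * m))%N.
Proof.
move=> hL hM; rewrite /CD card_imset; last exact: cD_inj.
rewrite card_ffun card_Rr.
have -> : #|fintype_ordinal__canonical__fintype_Finite m| = m by exact: card_ord.
by rewrite expnM.
Qed.

Definition ZS m (X : {set 'I_m}) : {set Z2vec m} := [set a | zeroOn X a].
Definition tr m (w q : Z2vec m) : Z2vec m := [ffun i => q i + w i].

Lemma ZS_Delta m (X : {set 'I_m}) : ZS X = Delta (~: X).
Proof.
apply/setP => a; rewrite !inE; apply/forall_inP/subsetP => [H i|H i iX].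
  by rewrite suppP inE; apply: contra => iX; apply: H.
apply: contraLR iX => ai; have := H i; rewrite suppP ai inE; by apply.
Qed.

Lemma card_ZS m (X : {set 'I_m}) : #|ZS X| = (2 ^ (m - #|X|))%N.
Proof.
rewrite ZS_Delta card_Delta; congr (2 ^ _)%N.
have h : (#|X| + #|~: X|)%N = m by rewrite cardsC; exact: card_ord.
lia.
Qed.

Lemma ZS_U m (X Y : {set 'I_m}) : ZS (X :|: Y) = ZS X :&: ZS Y.
Proof.
apply/setP => a; rewrite !inE; apply/forall_inP/andP => [H|[/forall_inP H1 /forall_inP H2] i].
  by split; apply/forall_inP => i iX; apply: H; rewrite inE iX ?orbT.
by rewrite inE => /orP [] ?; [apply: H1 | apply: H2].
Qed.

Lemma zvec_ZS m (X : {set 'I_m}) : zvec m \in ZS X.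
Proof. by rewrite inE; apply/forall_inP => i _; rewrite ffunE. Qed.

Lemma trK m (w : Z2vec m) : involutive (tr w).
Proof. by move=> q; apply/ffunP => i; rewrite /tr !ffunE -addrA F2xx addr0. Qed.

Lemma tr0q m (q : Z2vec m) : tr (zvec m) q = q.
Proof. by apply/ffunP => i; rewrite /tr !ffunE addr0. Qed.

Lemma trw0 m (w : Z2vec m) : tr w (zvec m) = w.
Proof. by apply/ffunP => i; rewrite /tr !ffunE add0r. Qed.

Lemma trww m (w : Z2vec m) : tr w w = zvec m.
Proof. by apply/ffunP => i; rewrite /tr !ffunE F2xx. Qed.

Lemma tr_eq0 m (w q : Z2vec m) : (tr w q == zvec m) = (q == w).
Proof.
apply/eqP/eqP => [e|->]; last exact: trww.
by rewrite -(trK w q) e trw0.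
Qed.

Lemma ZS_add m (X : {set 'I_m}) (w q : Z2vec m) :
  w \in ZS X -> q \in ZS X -> tr w q \in ZS X.
Proof.
rewrite !inE => /forall_inP H1 /forall_inP H2; apply/forall_inP => i iX.
by rewrite ffunE (eqP (H1 i iX)) (eqP (H2 i iX)) addr0.
Qed.

Lemma tr_ZS m (X : {set 'I_m}) (w q : Z2vec m) :
  w \in ZS X -> (tr w q \in ZS X) = (q \in ZS X).
Proof.
move=> wZ; apply/idP/idP => [h|]; last exact: ZS_add.
by rewrite -(trK w q); apply: ZS_add.
Qed.

Lemma tr_nZS m (X : {set 'I_m}) (w q : Z2vec m) :
  w \notin ZS X -> q \in ZS X -> tr w q \notin ZS X.
Proof.
move=> wZ qZ; apply: contra wZ => h.
have -> : w = tr q (tr w q) by apply/ffunP => i; rewrite /tr !ffunE addrC addrA F2xx add0r.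
exact: ZS_add.
Qed.

Lemma chiC_val m (X : {set 'I_m}) a :
  chi (Deltac X) a =
  if a == zvec m then p2 m - p2 #|X| else if a \in ZS X then - p2 #|X| else 0.
Proof.
rewrite chi_Deltac chi_Delta; case: eqP => [->|_].
  by move: (zvec_ZS X); rewrite inE => ->.
by rewrite inE; case: (zeroOn X a); rewrite ?sub0r ?subrr.
Qed.

Lemma sum_const (T : finType) (A : {set T}) (F : T -> int) c :
  {in A, forall x, F x = c} -> \sum_(x in A) F x = c * #|A|%:Z.
Proof.
move=> H; rewrite (eq_bigr (fun _ => c)) // sumr_const.
by rewrite -mulr_natr natz.
Qed.

Lemma sum_split (T : finType) (B : {set T}) (F : T -> int) :
  \sum_x F x = \sum_(x in B) F x + \sum_(x in ~: B) F x.
Proof.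
rewrite (bigID (fun x => x \in B)) /=; congr (_ + _).
by apply: eq_bigl => x; rewrite inE.
Qed.

Lemma card_ZSz m (X : {set 'I_m}) : #|ZS X|%:Z = p2 (m - #|X|).
Proof. by rewrite card_ZS p2E. Qed.

Lemma card_ZSC m (X : {set 'I_m}) : #|~: ZS X|%:Z = p2 m - p2 (m - #|X|).
Proof.
have h := cardsC (ZS X); rewrite card_Z2vec card_ZS in h.
rewrite -!p2E -h PoszD; ring.
Qed.

Lemma sum_chiC_ZS m (X : {set 'I_m}) (H : int -> int) :
  \sum_(a in ZS X) H (chi (Deltac X) a) =
  H (p2 m - p2 #|X|) + (p2 (m - #|X|) - 1) * H (- p2 #|X|).
Proof.
rewrite (big_setD1 _ (zvec_ZS X)) chiC_val eqxx; congr (_ + _).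
rewrite (sum_const (c := H (- p2 #|X|))); last first.
  move=> a; rewrite !inE => /andP [na aZ]; rewrite chiC_val (negbTE na).
  by move: aZ; rewrite inE => ->.
have h := cardsD1 (zvec m) (ZS X); rewrite zvec_ZS in h.
rewrite mulrC; congr (_ * _); rewrite -card_ZSz h PoszD addrAC (_ : Posz true - 1 = 0) ?add0r //.
Qed.

Lemma sum_chiC_nZS m (X : {set 'I_m}) (H : int -> int) :
  \sum_(a in ~: ZS X) H (chi (Deltac X) a) = (p2 m - p2 (m - #|X|)) * H 0.
Proof.
rewrite (sum_const (c := H 0)); first by rewrite card_ZSC mulrC.
move=> a; rewrite inE => aZ.
rewrite chiC_val (negbTE aZ); case: eqP => // e.
by move: aZ; rewrite e zvec_ZS.
Qed.

Lemma sum_chiC m (X : {set 'I_m}) (H : int -> int) :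
  \sum_a H (chi (Deltac X) a) =
  H (p2 m - p2 #|X|) + (p2 (m - #|X|) - 1) * H (- p2 #|X|)
  + (p2 m - p2 (m - #|X|)) * H 0.
Proof. by rewrite (sum_split (ZS X)) sum_chiC_ZS sum_chiC_nZS. Qed.

Lemma zvec_neq m (X : {set 'I_m}) q : q \notin ZS X -> q != zvec m.
Proof. by apply: contraNneq => ->; apply: zvec_ZS. Qed.

Lemma chi_nZS m (X : {set 'I_m}) q : q \notin ZS X -> chi (Deltac X) q = 0.
Proof. by move=> qZ; rewrite chiC_val (negbTE (zvec_neq qZ)) (negbTE qZ). Qed.

Lemma chi_ZS m (X : {set 'I_m}) q : q \in ZS X -> q != zvec m ->
  chi (Deltac X) q = - p2 #|X|.
Proof. by move=> qZ qn; rewrite chiC_val (negbTE qn) qZ. Qed.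

Lemma chi_z m (X : {set 'I_m}) : chi (Deltac X) (zvec m) = p2 m - p2 #|X|.
Proof. by rewrite chiC_val eqxx. Qed.

Lemma Q0 m (M : {set 'I_m}) (J : int -> int -> int) :
  \sum_q J (chi (Deltac M) q) (chi (Deltac M) (tr (zvec m) q)) =
  J (p2 m - p2 #|M|) (p2 m - p2 #|M|)
  + (p2 (m - #|M|) - 1) * J (- p2 #|M|) (- p2 #|M|)
  + (p2 m - p2 (m - #|M|)) * J 0 0.
Proof.
under eq_bigr do rewrite tr0q.
exact: (sum_chiC M (fun s => J s s)).
Qed.

Lemma Q1 m (M : {set 'I_m}) (J : int -> int -> int) w :
  w \in ZS M -> w != zvec m ->
  \sum_q J (chi (Deltac M) q) (chi (Deltac M) (tr w q)) =
  J (p2 m - p2 #|M|) (- p2 #|M|) + J (- p2 #|M|) (p2 m - p2 #|M|)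
  + (p2 (m - #|M|) - 2) * J (- p2 #|M|) (- p2 #|M|)
  + (p2 m - p2 (m - #|M|)) * J 0 0.
Proof.
move=> wZ wn; rewrite (sum_split (ZS M)).
have -> : \sum_(q in ~: ZS M) J (chi (Deltac M) q) (chi (Deltac M) (tr w q))
          = (p2 m - p2 (m - #|M|)) * J 0 0.
  rewrite (sum_const (c := J 0 0)); first by rewrite card_ZSC mulrC.
  move=> q; rewrite inE => qZ.
  have tZ : tr w q \notin ZS M by rewrite tr_ZS.
  by rewrite !chi_nZS.
rewrite (big_setD1 _ (zvec_ZS M)).
have wD : w \in ZS M :\ zvec m by rewrite in_setD1 wn wZ.
rewrite (big_setD1 _ wD).
rewrite (sum_const (c := J (- p2 #|M|) (- p2 #|M|))); last first.
  move=> q; rewrite !in_setD1 => /and3P [qw q0 qZ].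
  rewrite !chi_ZS //; first exact: ZS_add.
  by rewrite tr_eq0.
have h1 := cardsD1 (zvec m) (ZS M); rewrite zvec_ZS in h1.
have h2 := cardsD1 w (ZS M :\ zvec m); rewrite wD in h2.
have hc : #|(ZS M :\ zvec m) :\ w|%:Z = p2 (m - #|M|) - 2.
  by rewrite -card_ZSz h1 h2 !PoszD; rewrite [Posz true]/=; ring.
rewrite /= hc chi_z trw0 trww chi_z !chi_ZS //.
ring.
Qed.

Lemma Q2 m (M : {set 'I_m}) (J : int -> int -> int) w :
  w \notin ZS M ->
  \sum_q J (chi (Deltac M) q) (chi (Deltac M) (tr w q)) =
  J (p2 m - p2 #|M|) 0 + J 0 (p2 m - p2 #|M|)
  + (p2 (m - #|M|) - 1) * (J (- p2 #|M|) 0 + J 0 (- p2 #|M|))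
  + (p2 m - p2 (m - #|M|) - p2 (m - #|M|)) * J 0 0.
Proof.
move=> wZ; rewrite (sum_split (ZS M)).
have -> : \sum_(q in ZS M) J (chi (Deltac M) q) (chi (Deltac M) (tr w q))
   = \sum_(q in ZS M) J (chi (Deltac M) q) 0.
  by apply: eq_bigr => q qZ; rewrite (chi_nZS (tr_nZS wZ qZ)).
rewrite (sum_chiC_ZS M (fun s => J s 0)).
have -> : \sum_(q in ~: ZS M) J (chi (Deltac M) q) (chi (Deltac M) (tr w q))
   = \sum_(q in ~: ZS M) J 0 (chi (Deltac M) (tr w q)).
  by apply: eq_bigr => q; rewrite in_setC => qZ; rewrite (chi_nZS qZ).
rewrite (reindex_inj (can_inj (trK w))) /=.
under eq_bigr do rewrite trK.
set S := tr w @^-1: (~: ZS M).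
have -> : \sum_(q | tr w q \in ~: ZS M) J 0 (chi (Deltac M) q)
        = \sum_(q in S) J 0 (chi (Deltac M) q).
  by apply: eq_bigl => q; rewrite /S !inE.
rewrite (@big_setID _ _ _ _ S (ZS M)).
have SI : S :&: ZS M = ZS M.
  apply/setP => q; rewrite in_setI; case qZ: (q \in ZS M); rewrite ?andbF ?andbT //.
  by rewrite /S inE in_setC; apply: tr_nZS.
rewrite SI (sum_chiC_ZS M (fun s => J 0 s)).
rewrite (sum_const (c := J 0 0)); last first.
  by move=> q; rewrite in_setD => /andP [qZ _]; rewrite chi_nZS.
have hS : #|S|%:Z = p2 m - p2 (m - #|M|).
  by rewrite card_preimset ?card_ZSC //; apply: (can_inj (trK w)).
have hD : #|S :\: ZS M|%:Z = p2 m - p2 (m - #|M|) - p2 (m - #|M|).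
  by rewrite cardsD SI -hS -card_ZSz subzn // -SI subset_leq_card // subsetIl.
rewrite /= hD; ring.
Qed.

Definition Jf (G : int -> int) (K c : int) := fun x y : int => G (x * K + c * K + y * K).

Lemma K3_in m (N : {set 'I_m}) w : w \in ZS N -> chi (Delta N) w = p2 #|N|.
Proof. by rewrite chi_Delta inE => ->. Qed.

Lemma K3_out m (N : {set 'I_m}) w : w \notin ZS N -> chi (Delta N) w = 0.
Proof. by rewrite chi_Delta inE => /negbTE ->. Qed.

Lemma cardIz (T : finType) (A B : {set T}) : #|A :\: B|%:Z = #|A|%:Z - #|A :&: B|%:Z.
Proof. by rewrite cardsD subzn // subset_leq_card // subsetIl. Qed.

Lemma Tsum m (M N : {set 'I_m}) (G : int -> int) :
  \sum_w \sum_q G (chi (Deltac M) q * chi (Delta N) w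
                  + chi (Deltac M) w * chi (Delta N) (zvec m)
                  + chi (Deltac M) (tr w q) * chi (Delta N) w) =
  G ((p2 m - p2 #|M|) * p2 #|N| + (p2 m - p2 #|M|) * p2 #|N| + (p2 m - p2 #|M|) * p2 #|N|)
  + (p2 (m - #|M|) + 2 * p2 (m - #|M :|: N|) - 3)
    * G (- (p2 #|M| * p2 #|N|) + (p2 m - p2 #|M|) * p2 #|N| + - (p2 #|M| * p2 #|N|))
  + (p2 m - p2 (m - #|M|) + 2 * (p2 (m - #|N|) - p2 (m - #|M :|: N|)))
    * G ((p2 m - p2 #|M|) * p2 #|N|)
  + (p2 (m - #|M :|: N|) - 1) * (p2 (m - #|M|) - 2)
    * G (- (p2 #|M| * p2 #|N|) + - (p2 #|M| * p2 #|N|) + - (p2 #|M| * p2 #|N|))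
  + ((p2 (m - #|M :|: N|) - 1) * (p2 m - p2 (m - #|M|))
     + p2 m * (p2 (m - #|M|) - p2 (m - #|M :|: N|))
     + 2 * (p2 (m - #|N|) - p2 (m - #|M :|: N|)) * (p2 (m - #|M|) - 1))
    * G (- (p2 #|M| * p2 #|N|))
  + ((p2 (m - #|N|) - p2 (m - #|M :|: N|)) * (p2 m - 2 * p2 (m - #|M|))
     + p2 m * (p2 m - p2 (m - #|M|) - p2 (m - #|N|) + p2 (m - #|M :|: N|)))
    * G 0.
Proof.
have K0 : chi (Delta N) (zvec m) = p2 #|N| by apply: K3_in; apply: zvec_ZS.
rewrite K0 (sum_split (ZS N)).
have -> : \sum_(w in ~: ZS N) \sum_q G (chi (Deltac M) q * chi (Delta N) w
                  + chi (Deltac M) w * p2 #|N| + chi (Deltac M) (tr w q) * chi (Delta N) w)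
   = \sum_(w in ~: ZS N) p2 m * G (chi (Deltac M) w * p2 #|N|).
  apply: eq_bigr => w; rewrite in_setC => wN; rewrite K3_out //.
  rewrite (eq_bigr (fun _ => G (chi (Deltac M) w * p2 #|N|))); last first.
    by move=> q _; rewrite !mulr0 addr0 add0r.
  by rewrite sumr_const card_Z2vec -mulr_natr natz p2E mulrC.
rewrite (@big_setID _ _ _ _ (~: ZS N) (ZS M)) /=.
rewrite (sum_const (A := ~: ZS N :&: ZS M) (c := p2 m * G (- (p2 #|M| * p2 #|N|)))); last first.
  move=> w; rewrite in_setI in_setC => /andP [wN wM].
  have wn : w != zvec m by apply: contraNneq wN => ->; apply: zvec_ZS.
  by rewrite chi_ZS // mulNr.
rewrite (sum_const (A := ~: ZS N :\: ZS M) (c := p2 m * G 0)); last first.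
  move=> w; rewrite in_setD in_setC => /andP [wM wN].
  by rewrite chi_nZS // mul0r.
rewrite (big_setD1 _ (zvec_ZS N)) /= K0 chi_z.
rewrite (Q0 M (Jf G (p2 #|N|) (p2 m - p2 #|M|))).
rewrite (@big_setID _ _ _ _ (ZS N :\ zvec m) (ZS M)) /=.
rewrite (sum_const (A := (ZS N :\ zvec m) :&: ZS M) (c := let J := Jf G (p2 #|N|) (- p2 #|M|) in
   J (p2 m - p2 #|M|) (- p2 #|M|) + J (- p2 #|M|) (p2 m - p2 #|M|)
  + (p2 (m - #|M|) - 2) * J (- p2 #|M|) (- p2 #|M|)
  + (p2 m - p2 (m - #|M|)) * J 0 0)); last first.
  move=> w; rewrite in_setI in_setD1 => /andP [/andP [wn wN] wM].
  rewrite K3_in // chi_ZS //.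
  exact: (Q1 (Jf G (p2 #|N|) (- p2 #|M|)) wM wn).
rewrite (sum_const (A := (ZS N :\ zvec m) :\: ZS M) (c := let J := Jf G (p2 #|N|) 0 in
  J (p2 m - p2 #|M|) 0 + J 0 (p2 m - p2 #|M|)
  + (p2 (m - #|M|) - 1) * (J (- p2 #|M|) 0 + J 0 (- p2 #|M|))
  + (p2 m - p2 (m - #|M|) - p2 (m - #|M|)) * J 0 0)); last first.
  move=> w; rewrite in_setD in_setD1 => /andP [wM /andP [wn wN]].
  rewrite K3_in // chi_nZS //.
  exact: (Q2 (Jf G (p2 #|N|) 0) wM).
have cB : #|ZS N :&: ZS M|%:Z = p2 (m - #|M :|: N|) by rewrite setIC -ZS_U card_ZSz.
have c1 : #|(ZS N :\ zvec m) :&: ZS M|%:Z = p2 (m - #|M :|: N|) - 1.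
  rewrite -cB (cardsD1 (zvec m) (ZS N :&: ZS M)) in_setI !zvec_ZS PoszD.
  rewrite setIDAC /=; ring.
have c2 : #|(ZS N :\ zvec m) :\: ZS M|%:Z = p2 (m - #|N|) - p2 (m - #|M :|: N|).
  have h := cardsD1 (zvec m) (ZS N); rewrite zvec_ZS in h.
  have h' : #|ZS N :\ zvec m|%:Z = p2 (m - #|N|) - 1.
    by rewrite -card_ZSz h PoszD [Posz true]/=; ring.
  by rewrite cardIz c1 h'; ring.
have c3 : #|~: ZS N :&: ZS M|%:Z = p2 (m - #|M|) - p2 (m - #|M :|: N|).
  by rewrite setIC -setDE cardIz -ZS_U !card_ZSz.
have c4 : #|~: ZS N :\: ZS M|%:Z = p2 m - p2 (m - #|M|) - p2 (m - #|N|) + p2 (m - #|M :|: N|).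
  by rewrite cardIz c3 card_ZSC; ring.
rewrite c1 c2 c3 c4 /Jf /=.
rewrite ?(mul0r, mulNr, addr0, add0r).
have e1 : (p2 m - p2 #|M|) * p2 #|N| - p2 #|M| * p2 #|N| - p2 #|M| * p2 #|N|
   = - (p2 #|M| * p2 #|N|) + (p2 m - p2 #|M|) * p2 #|N| - p2 #|M| * p2 #|N| by ring.
have e2 : - (p2 #|M| * p2 #|N|) - p2 #|M| * p2 #|N| + (p2 m - p2 #|M|) * p2 #|N|
   = - (p2 #|M| * p2 #|N|) + (p2 m - p2 #|M|) * p2 #|N| - p2 #|M| * p2 #|N| by ring.
rewrite e1 e2; ring.
Qed.

Definition TS (P A K xM xN xB : int) (G : int -> int) : int :=
  G ((P - A) * K + (P - A) * K + (P - A) * K)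
  + (xM + 2 * xB - 3) * G (- (A * K) + (P - A) * K + - (A * K))
  + (P - xM + 2 * (xN - xB)) * G ((P - A) * K)
  + (xB - 1) * (xM - 2) * G (- (A * K) + - (A * K) + - (A * K))
  + ((xB - 1) * (P - xM) + P * (xM - xB) + 2 * (xN - xB) * (xM - 1)) * G (- (A * K))
  + ((xN - xB) * (P - 2 * xM) + P * (P - xM - xN + xB)) * G 0.

Lemma Tsum' m (M N : {set 'I_m}) (G : int -> int) :
  \sum_w \sum_q G (chi (Deltac M) q * chi (Delta N) w
                  + chi (Deltac M) w * chi (Delta N) (zvec m)
                  + chi (Deltac M) (tr w q) * chi (Delta N) w) =
  TS (p2 m) (p2 #|M|) (p2 #|N|) (p2 (m - #|M|)) (p2 (m - #|N|)) (p2 (m - #|M :|: N|)) G.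
Proof. exact: Tsum. Qed.

Definition Hx (X y : int) : int := if y == X then 1 else 0.
Arguments Hx : simpl never.

Definition TAB (P Ll A K xL xM xN xB X : int) : int :=
  (xM * xB - xM - 2 * xB + 2) * Hx X (3 * (P - Ll) * (P * K))
  + (xL - 1) * Hx X (3 * (P - A) * (P * K))
  + (xM - 2 * xN + 2 * xM * xN - 3 * xM * xB + P * xM - P + 2 * xB) * Hx X ((P - Ll) * (3 * P - 2 * A) * K)
  + (2 * xL * xN - 2 * xN - 2 * xL * xB + 2 * xB + P * xL - P - xL * xM + xM) * Hx X ((3 * P - 2 * Ll) * (P - A) * K)
  + (2 * xL * xB - 2 * xB - 3 * xL - xM + xL * xM + 3) * Hx X (3 * (P * K) * (P - A) - 2 * (P * Ll * K))
  + (P * P * P - P * xL * xM - 2 * xL * xM * xN + 2 * xL * xM * xB) * Hx X (3 * (P - Ll) * (P - A) * K)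
  + (2 * xL * xM * xN - 2 * xL * xN - 2 * xM * xN + 2 * xN + 2 * xL * xB - 2 * xB + P * xL * xM - P * xM - P * xL + P - 3 * xL * xM * xB + xL * xM + 3 * xM * xB - xM) * Hx X (3 * (P * K) * (P - Ll - A) + 2 * (Ll * A * K))
  + (xL * xM * xB - xL * xM - xM * xB + xM - 2 * xL * xB + 2 * xL + 2 * xB - 2) * Hx X (3 * (P - Ll - A) * (P * K))
  + (2 * xB + xM - 3) * Hx X (2 * (P - Ll) * (P * K))
  + (P + 2 * xN - xM - 2 * xB) * Hx X (2 * (P - Ll) * (P - A) * K)
  + (1) * Hx X (0).

Lemma final_alg (P Ll A K xL xM xN xB X : int) :
  TS P A K xM xN xB (fun t => Hx X (3 * ((P - Ll) * (P - A) * K) - (P - Ll) * t))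
  + (xL - 1) * TS P A K xM xN xB (fun t => Hx X (3 * ((P - Ll) * (P - A) * K) - - Ll * t))
  + (P - xL) * TS P A K xM xN xB (fun t => Hx X (3 * ((P - Ll) * (P - A) * K) - 0 * t))
  = TAB P Ll A K xL xM xN xB X.
Proof.
rewrite /TS /TAB; cbv beta.
have -> : 3 * ((P - Ll) * (P - A) * K) - ((P - Ll)) * ((P - A) * K + (P - A) * K + (P - A) * K) = 0 by ring.
have -> : 3 * ((P - Ll) * (P - A) * K) - ((P - Ll)) * (- (A * K) + (P - A) * K + - (A * K)) = 2 * (P - Ll) * (P * K) by ring.
have -> : 3 * ((P - Ll) * (P - A) * K) - ((P - Ll)) * ((P - A) * K) = 2 * (P - Ll) * (P - A) * K by ring.
have -> : 3 * ((P - Ll) * (P - A) * K) - ((P - Ll)) * (- (A * K) + - (A * K) + - (A * K)) = 3 * (P - Ll) * (P * K) by ring.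
have -> : 3 * ((P - Ll) * (P - A) * K) - ((P - Ll)) * (- (A * K)) = (P - Ll) * (3 * P - 2 * A) * K by ring.
have -> : 3 * ((P - Ll) * (P - A) * K) - ((P - Ll)) * (0) = 3 * (P - Ll) * (P - A) * K by ring.
have -> : 3 * ((P - Ll) * (P - A) * K) - (- Ll) * ((P - A) * K + (P - A) * K + (P - A) * K) = 3 * (P - A) * (P * K) by ring.
have -> : 3 * ((P - Ll) * (P - A) * K) - (- Ll) * (- (A * K) + (P - A) * K + - (A * K)) = 3 * (P * K) * (P - A) - 2 * (P * Ll * K) by ring.
have -> : 3 * ((P - Ll) * (P - A) * K) - (- Ll) * ((P - A) * K) = (3 * P - 2 * Ll) * (P - A) * K by ring.
have -> : 3 * ((P - Ll) * (P - A) * K) - (- Ll) * (- (A * K) + - (A * K) + - (A * K)) = 3 * (P - Ll - A) * (P * K) by ring.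
have -> : 3 * ((P - Ll) * (P - A) * K) - (- Ll) * (- (A * K)) = 3 * (P * K) * (P - Ll - A) + 2 * (Ll * A * K) by ring.
have -> : 3 * ((P - Ll) * (P - A) * K) - (- Ll) * (0) = 3 * (P - Ll) * (P - A) * K by ring.
have -> : 3 * ((P - Ll) * (P - A) * K) - (0) * ((P - A) * K + (P - A) * K + (P - A) * K) = 3 * (P - Ll) * (P - A) * K by ring.
have -> : 3 * ((P - Ll) * (P - A) * K) - (0) * (- (A * K) + (P - A) * K + - (A * K)) = 3 * (P - Ll) * (P - A) * K by ring.
have -> : 3 * ((P - Ll) * (P - A) * K) - (0) * ((P - A) * K) = 3 * (P - Ll) * (P - A) * K by ring.
have -> : 3 * ((P - Ll) * (P - A) * K) - (0) * (- (A * K) + - (A * K) + - (A * K)) = 3 * (P - Ll) * (P - A) * K by ring.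
have -> : 3 * ((P - Ll) * (P - A) * K) - (0) * (- (A * K)) = 3 * (P - Ll) * (P - A) * K by ring.
have -> : 3 * ((P - Ll) * (P - A) * K) - (0) * (0) = 3 * (P - Ll) * (P - A) * K by ring.
ring.
Qed.

Lemma big_cons_H (X : int) (x : int * int) (r : seq (int * int)) :
  \sum_(p <- x :: r | p.1 == X) p.2 = x.2 * Hx X x.1 + \sum_(p <- r | p.1 == X) p.2.
Proof. by rewrite big_cons /Hx; case: ifP => _; rewrite ?mulr1 ?mulr0 ?add0r. Qed.

Lemma p2D x y : p2 (x + y) = p2 x * p2 y.
Proof. by rewrite /p2 exprD. Qed.

Lemma p2_1 : p2 1 = 2.
Proof. by rewrite /p2 expr1. Qed.

Lemma table_eq (m l a n b : nat) (X : int) :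
  (l <= m)%N -> (a <= m)%N -> (n <= m)%N -> (b <= m)%N ->
  \sum_(p <- table34 m l a n b | p.1 == X) p.2 =
  TAB (p2 m) (p2 l) (p2 a) (p2 n) (p2 (m - l)) (p2 (m - a)) (p2 (m - n)) (p2 (m - b)) X.
Proof.
move=> hl ha hn hb.
rewrite /table34 !big_cons_H big_nil addr0; cbn [fst snd].
rewrite (_ : (3 * m - l - a - b = (m - l) + (m - a) + (m - b))%N); last lia.
rewrite (_ : (3 * m - l - a - n = (m - l) + (m - a) + (m - n))%N); last lia.
rewrite (_ : (3 * m - l - a = m + (m - l) + (m - a))%N); last lia.
rewrite (_ : (3 * m = m + m + m)%N); last lia.
rewrite (_ : (2 * m - a - b = (m - a) + (m - b))%N); last lia.
rewrite (_ : (2 * m - a - n = (m - a) + (m - n))%N); last lia.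
rewrite (_ : (2 * m - l - n = (m - l) + (m - n))%N); last lia.
rewrite (_ : (2 * m - l - b = (m - l) + (m - b))%N); last lia.
rewrite (_ : (2 * m - l - a = (m - l) + (m - a))%N); last lia.
rewrite (_ : (2 * m - a = m + (m - a))%N); last lia.
rewrite (_ : (2 * m - l = m + (m - l))%N); last lia.
rewrite !p2D p2_1 /TAB.
ring.
Qed.

Lemma rv_tr m (v : Rvec m) : rv v = tr (wv v) (qv v).
Proof. by apply/ffunP => i; rewrite /rv /tr !ffunE. Qed.

Definition hrep m (x : Z2vec m * (Z2vec m * Z2vec m)) : Rvec m :=
  [ffun i => mkR (x.1 i) (x.2.2 i) (x.2.1 i - x.1 i - x.2.2 i)].
Definition grep m (v : Rvec m) : Z2vec m * (Z2vec m * Z2vec m) := (pv v, (wv v, qv v)).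

Lemma reparam m (F : Z2vec m -> Z2vec m -> Z2vec m -> int) :
  \sum_(v : Rvec m) F (pv v) (qv v) (wv v) = \sum_p \sum_w \sum_q F p q w.
Proof.
under [RHS]eq_bigr do rewrite pair_big.
rewrite [RHS]pair_big /=.
have gK : cancel (@grep m) (@hrep m).
  move=> v; apply/ffunP => i; rewrite /hrep /grep /pv /qv /wv /= !ffunE.
  case: (v i) => [[a b] c]; rewrite /mkR /rc /sc /tc /=; congr (_, _, _).
  ring.
have hK : cancel (@hrep m) (@grep m).
  move=> [p [w q]]; rewrite /hrep /grep /pv /qv /wv /=.
  congr (_, (_, _)); apply/ffunP => i; rewrite !ffunE /mkR /rc /sc /tc /=; ring.
rewrite (reindex (@hrep m)); last by exists (@grep m) => x _; [apply: hK | apply: gK].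
apply: eq_bigr => x _.
by rewrite -[x in RHS]hK.
Qed.

Lemma Acount_sum m (L M N : {set 'I_m}) w : L != setT -> M != setT ->
  (Acount (Dset L M N) w)%:Z =
  \sum_(v : Rvec m) Hx (2 * w)%N%:Z (2 * wtL (cD (Dset L M N) v))%N%:Z.
Proof.
move=> hL hM; rewrite /Acount.
set D := Dset L M N.
have -> : [set c in CD D | wtL c == w] = cD D @: [set v | wtL (cD D v) == w].
  apply/setP => c; rewrite inE; apply/andP/imsetP.
    case=> /imsetP [v _ ->] e; exists v => //; by rewrite inE.
  case=> v; rewrite inE => e ->; split => //; exact: imset_f.
rewrite card_imset; last exact: cD_inj.
rewrite -[LHS]mul1r -(sum_const (F := fun _ => 1)) // big_mkcond /=.
apply: eq_bigr => v _; rewrite inE /Hx eqz_nat eqn_pmul2l //.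
Qed.

Lemma card_le m (X : {set 'I_m}) : (#|X| <= m)%N.
Proof. by have := max_card (mem X); rewrite card_ord. Qed.

Lemma p2sub m k : (k <= m)%N -> ((2 ^ m - 2 ^ k)%N)%:Z = p2 m - p2 k.
Proof. by move=> h; rewrite -!p2E -subzn ?leq_exp2l. Qed.

Unset Implicit Arguments.

Theorem theorem3p4 (m : nat) (L M N : {set 'I_m}) :
  L != setT -> M != setT ->
  let D := Dset L M N in
  [/\ #|D| = ((2 ^ m - 2 ^ #|L|) * (2 ^ m - 2 ^ #|M|) * 2 ^ #|N|)%N,
      #|CD D| = (2 ^ (3 * m))%N,
      (size (nonzero_weights D) <= 10)%N &
      forall w : nat,
        (Acount D w)%:Z =
        \sum_(p <- table34 m #|L| #|M| #|N| #|M :|: N| | p.1 == (2 * w)%:Z) p.2].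
Proof.
move=> hL hM D.
have cD1 : #|D| = ((2 ^ m - 2 ^ #|L|) * (2 ^ m - 2 ^ #|M|) * 2 ^ #|N|)%N.
  by rewrite /D card_D /S3 !cardsX !card_Deltac card_Delta.
have cardDz : #|D|%:Z = (p2 m - p2 #|L|) * (p2 m - p2 #|M|) * p2 #|N|.
  by rewrite cD1 !PoszM !p2sub ?card_le // p2E.
have A4 : forall w : nat, (Acount D w)%:Z =
    \sum_(p <- table34 m #|L| #|M| #|N| #|M :|: N| | p.1 == (2 * w)%:Z) p.2.
  move=> w; rewrite /D Acount_sum //.
  under eq_bigr do rewrite wt_formula rv_tr -/D cardDz.
  rewrite (reparam (fun p q w0 => Hx (2 * w)%N%:Z
     (3 * ((p2 m - p2 #|L|) * (p2 m - p2 #|M|) * p2 #|N|) - chi (Deltac L) p *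
       (chi (Deltac M) q * chi (Delta N) w0 + chi (Deltac M) w0 * chi (Delta N) (zvec m)
        + chi (Deltac M) (tr w0 q) * chi (Delta N) w0)))).
  rewrite (sum_chiC L (fun s => \sum_w0 \sum_q Hx (2 * w)%N%:Z
     (3 * ((p2 m - p2 #|L|) * (p2 m - p2 #|M|) * p2 #|N|) - s *
       (chi (Deltac M) q * chi (Delta N) w0 + chi (Deltac M) w0 * chi (Delta N) (zvec m)
        + chi (Deltac M) (tr w0 q) * chi (Delta N) w0)))).
  rewrite (Tsum' M N (fun t => Hx (2 * w)%N%:Z
     (3 * ((p2 m - p2 #|L|) * (p2 m - p2 #|M|) * p2 #|N|) - (p2 m - p2 #|L|) * t))).
  rewrite (Tsum' M N (fun t => Hx (2 * w)%N%:Z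
     (3 * ((p2 m - p2 #|L|) * (p2 m - p2 #|M|) * p2 #|N|) - - p2 #|L| * t))).
  rewrite (Tsum' M N (fun t => Hx (2 * w)%N%:Z
     (3 * ((p2 m - p2 #|L|) * (p2 m - p2 #|M|) * p2 #|N|) - 0 * t))).
  rewrite (final_alg (p2 m) (p2 #|L|) (p2 #|M|) (p2 #|N|) (p2 (m - #|L|))
             (p2 (m - #|M|)) (p2 (m - #|N|)) (p2 (m - #|M :|: N|))).
  by rewrite table_eq ?card_le.
split => //.
- exact: card_CD.
- have Apos x : x \in nonzero_weights D -> (x != 0)%N /\ (0 < Acount D x)%N.
    rewrite /nonzero_weights mem_undup => /mapP [c].
    rewrite mem_filter mem_enum => /andP [nz cC] ->.
    split => //; apply/card_gt0P; exists c; by rewrite inE cC eqxx.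
  set s := nonzero_weights D.
  have us : uniq (0%:Z :: [seq (2 * x)%N%:Z | x <- s]).
    rewrite /= map_inj_uniq ?undup_uniq; last first.
      by move=> x y /eqP; rewrite eqz_nat eqn_pmul2l // => /eqP.
    rewrite andbT; apply/mapP => -[x xs] /(congr1 absz) /= e.
    have [nx _] := Apos x xs; move: nx e; case: x {xs} => //.
  have sub : {subset (0%:Z :: [seq (2 * x)%N%:Z | x <- s]) <=
              [seq p.1 | p <- table34 m #|L| #|M| #|N| #|M :|: N|]}.
    move=> y; rewrite inE => /orP [/eqP ->|/mapP [x xs ->]].
      by rewrite /table34 /= !inE eqxx !orbT.
    have [nx Ax] := Apos x xs.
    case: (boolP (has (fun p : int * int => p.1 == (2 * x)%N%:Z)
                   (table34 m #|L| #|M| #|N| #|M :|: N|))) => [/hasP [p pin /eqP <-]|nh].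
      exact: map_f.
    have := A4 x; rewrite big_hasC // => /(congr1 absz) /= e.
    by rewrite e in Ax.
  have := uniq_leq_size us sub; rewrite /= !size_map /table34 /=.
  by [].
Qed.
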